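(* Consider the opinion--action model described in the context, with $\phi\in(0,1)$ and arbitrary initial values $x_i(0),y_i(0)\in[0,1]$, and let $P(t)$, $t\ge 1$, be its augmented state matrices and $\mathbf{z}(t)$ its augmented state. Suppose there exists a finite time $T\in\mathbb{Z}_{>0}$ after which the structure of the digraph $\mathcal{G}(P(t))$ stabilizes, i.e., for all $t\ge T$, $\mathcal{G}(P(t))$ has a fixed number of strongly connected components and the node set of each strongly connected component is the same for all $t\ge T$. Then the system converges to one of the following steady states: (i) Consensus: if $\mathcal{G}(P(t))$ remains strongly connected (for $t\ge T$), then for every $i\in\{1,\dots,2n\}$ the limit $z_i^\ast=\lim_{t\to\infty}z_i(t)$ exists and $z_i^\ast=z_j^\ast$ for all $i,j\in\{1,\dots,2n\}$. (ii) Clustering: if the condensation digraph of $\mathcal{G}(P(t))$ (for $t\ge T$) consists of one sink and one or more singleton sources, then, letting $\Theta$ be the set of nodes forming singleton sources and $\Omega$ the set of nodes of the sink component, $z_i(t)=z_i(T)$ for all $i\in\Theta$ and all $t\ge T$, and $\lim_{t\to\infty}\mathrm{dist}\big(z_j(t),\operatorname{conv}\{z_i(T)\mid i\in\Theta\}\big)=0$ for all $j\in\Omega$.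
   Context: Fix an integer $n\ge 1$, agent set $\mathcal{V}=\{1,\dots,n\}$, a confidence threshold $\epsilon\in[0,1]$ and a decision weight $\phi\in[0,1]$. Each agent $i$ has opinion $x_i(t)\in[0,1]$ and action $y_i(t)\in[0,1]$. For $t\in\mathbb{Z}_{\ge0}$ the model evolves by: $\mathcal{N}_i(t)=\{j\in\mathcal{V}\mid j\neq i,\ |x_i(t)-y_j(t)|\le\epsilon\}$; $x_i(t+1)=\frac{x_i(t)+\sum_{j\in\mathcal{N}_i(t)}y_j(t)}{|\mathcal{N}_i(t)|+1}$; $y_i(t+1)=\phi\,x_i(t+1)+(1-\phi)\,y_{\mathrm{avg}}(t)$ with $y_{\mathrm{avg}}(t)=\frac1n\sum_{k=1}^n y_k(t)$. For $t\ge1$ the augmented state is $\mathbf{z}(t)\in\mathbb{R}^{2n}$ with $z_i(t)=x_i(t)$ and $z_{n+i}(t)=y_i(t-1)$ for $i\in\mathcal{V}$; it satisfies $\mathbf{z}(t+1)=P(t)\mathbf{z}(t)$ for $t\ge1$, where $P(t)=\begin{bmatrix}P_{11}(t)&P_{12}(t)\\ P_{21}&P_{22}\end{bmatrix}$ with $n\times n$ blocks: $[P_{11}(t)]_{ij}=\frac{1}{|\mathcal{N}_i(t)|+1}$ if $j=i$, $\frac{\phi}{|\mathcal{N}_i(t)|+1}$ if $j\in\mathcal{N}_i(t)$, and $0$ otherwise; $[P_{12}(t)]_{ij}=\frac{(1-\phi)|\mathcal{N}_i(t)|}{(|\mathcal{N}_i(t)|+1)n}$ for all $i,j$; $P_{21}=\phi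 I_n$; $P_{22}=\frac{1-\phi}{n}\mathbf{1}_n\mathbf{1}_n^\top$. For a nonnegative matrix $A\in\mathbb{R}^{m\times m}$, $\mathcal{G}(A)$ is the digraph on $\{1,\dots,m\}$ with a directed edge $(j,i)$ (from $j$ to $i$) iff $a_{ij}>0$. A strongly connected component (SCC) is a maximal strongly connected subgraph; the condensation digraph has the SCCs as nodes and an edge from SCC$_a$ to SCC$_b$ ($a\ne b$) iff some node of SCC$_a$ has an edge to some node of SCC$_b$. A source is a node with no incoming edges, a sink a node with no outgoing edges; a singleton SCC has one node. $\operatorname{conv}$ denotes convex hull and $\mathrm{dist}(x,S)=\inf_{y\in S}|x-y|$. *)

(* Defs.v *)
From HB Require Import structures.
From mathcomp Require Import all_boot all_order all_algebra.
From mathcomp Require Import all_classical all_reals all_analysis.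
Set Implicit Arguments. Unset Strict Implicit. Unset Printing Implicit Defensive.
Import Order.TTheory GRing.Theory Num.Theory.
Local Open Scope ring_scope.

Section Model.
Variables (R : realType) (n : nat) (eps phi : R).

Definition nbrs (x y : 'I_n -> R) (i : 'I_n) : {set 'I_n} :=
  [set j | (j != i) && (`|x i - y j| <= eps)].

Definition yavg (y : 'I_n -> R) : R := (\sum_(k < n) y k) / n%:R.

Definition step (xy : ('I_n -> R) * ('I_n -> R)) : ('I_n -> R) * ('I_n -> R) :=
  let x := xy.1 in let y := xy.2 in
  let x' := fun i => (x i + \sum_(j in nbrs x y i) y j) / (#|nbrs x y i|%:R + 1) in
  (x', fun i => phi * x' i + (1 - phi) * yavg y).

Fixpoint state (x0 y0 : 'I_n -> R) (t : nat) : ('I_n -> R) * ('I_n -> R) :=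
  match t with 0 => (x0, y0) | t'.+1 => step (state x0 y0 t') end.

Definition xs x0 y0 t := (state x0 y0 t).1.
Definition ys x0 y0 t := (state x0 y0 t).2.

(* Augmented state z(t) (meaningful for t >= 1):
   z_i(t) = x_i(t), z_{n+i}(t) = y_i(t-1). *)
Definition zs x0 y0 (t : nat) (k : 'I_(n + n)) : R :=
  match fintype.split k with
  | inl i => xs x0 y0 t i
  | inr i => ys x0 y0 t.-1 i
  end.

Definition Pmat x0 y0 (t : nat) : 'M[R]_(n + n) :=
  let N := nbrs (xs x0 y0 t) (ys x0 y0 t) in
  block_mx
    (\matrix_(i, j) (if j == i then (#|N i|%:R + 1)^-1
                     else if j \in N i then phi / (#|N i|%:R + 1) else 0))
    (\matrix_(i, j) ((1 - phi) * #|N i|%:R / ((#|N i|%:R + 1) * n%:R)))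
    (phi%:M)
    (\matrix_(i, j) ((1 - phi) / n%:R)).
End Model.

Section Graph.
Variables (R : realType) (m : nat) (A : 'M[R]_m).

Definition gadj : rel 'I_m := fun j i => 0 < A i j.
Definition reach : rel 'I_m := connect gadj.

Definition scc_of (i : 'I_m) : {set 'I_m} := [set j | reach i j && reach j i].
Definition sccs : {set {set 'I_m}} := [set scc_of i | i : 'I_m].

Definition strongly_connected : Prop := forall i j, reach i j.

Definition cond_edge (C D : {set 'I_m}) : bool :=
  (C != D) && [exists a in C, exists b in D, gadj a b].
Definition is_source (C : {set 'I_m}) : bool :=
  [forall D in sccs, ~~ cond_edge D C].
Definition is_sink (C : {set 'I_m}) : bool :=
  [forall D in sccs, ~~ cond_edge C D].

Definition one_sink_singleton_sources : Prop :=
  exists Om : {set 'I_m},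
    [/\ Om \in sccs, is_sink Om,
        (forall C, C \in sccs -> is_sink C -> C = Om),
        (forall C, C \in sccs -> C != Om -> #|C| = 1%N /\ is_source C)
      & exists C, C \in sccs /\ C != Om].

Definition singleton_source_nodes : {set 'I_m} :=
  \bigcup_(C in sccs | (#|C| == 1%N) && is_source C) C.
Definition sink_nodes : {set 'I_m} :=
  \bigcup_(C in sccs | is_sink C) C.
End Graph.

Section Geom.
Variables (R : realType) (m : nat).
Definition conv_pts (S : {set 'I_m}) (v : 'I_m -> R) : set R :=
  [set x | exists w : 'I_m -> R,
     [/\ forall i, 0 <= w i, forall i, i \notin S -> w i = 0,
         \sum_(i < m) w i = 1 & x = \sum_(i < m) w i * v i]].
Definition dist (x : R) (S : set R) : R := inf [set `|x - y| | y in S].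
End Geom.

(* Main.v *)
Require Import Defs.
From HB Require Import structures.
From mathcomp Require Import all_boot all_order all_algebra.
From mathcomp Require Import all_classical all_reals all_analysis.
From mathcomp Require Import ring lra zify.
Import Order.TTheory GRing.Theory Num.Theory.
Import numFieldNormedType.Exports.
Local Open Scope ring_scope.
Local Open Scope classical_set_scope.
Set Implicit Arguments. Unset Strict Implicit. Unset Printing Implicit Defensive.


Lemma ord_gt0 (n : nat) (i : 'I_n) : (0 < n)%N.
Proof. exact: leq_ltn_trans (leq0n i) (ltn_ord i). Qed.

Lemma yavg_le (R : realType) (n : nat) (Y : 'I_n -> R) h :
  (0 < n)%N -> (forall i, Y i <= h) -> yavg Y <= h.
Proof.
move=> n0 Hy; rewrite /yavg ler_pdivrMr ?ltr0n //.
apply: le_trans (ler_sum _ (fun i _ => Hy i)) _.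
by rewrite sumr_const card_ord mulr_natr.
Qed.

Lemma yavgN (R : realType) (n : nat) (Y : 'I_n -> R) :
  yavg (fun i => - Y i) = - yavg Y.
Proof. by rewrite /yavg sumrN mulNr. Qed.

Lemma cvx_le (R : realType) (n : nat) (S : {set 'I_n}) (a u v : R) (b : 'I_n -> R) :
  a <= u -> (forall j, b j <= v) ->
  (a + \sum_(j in S) b j) / (#|S|%:R + 1) <= (u + #|S|%:R * v) / (#|S|%:R + 1).
Proof.
move=> au bv; rewrite ler_pM2r ?invr_gt0 ?ltr_wpDl ?ler0n //.
apply: lerD => //; apply: le_trans (ler_sum _ (fun j _ => bv j)) _.
by rewrite sumr_const mulr_natl.
Qed.

Definition Eqs (R : realType) (n : nat) (phi : R) (X1 Y0 X2 Y1 : 'I_n -> R)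
  (N : 'I_n -> {set 'I_n}) :=
  (forall i, Y1 i = phi * X1 i + (1 - phi) * yavg Y0) /\
  (forall i, X2 i = (X1 i + \sum_(j in N i) Y1 j) / (#|N i|%:R + 1)).

Lemma EqsN (R : realType) (n : nat) (phi : R) (X1 Y0 X2 Y1 : 'I_n -> R) (N : 'I_n -> {set 'I_n}) :
  Eqs phi X1 Y0 X2 Y1 N ->
  Eqs phi (fun i => - X1 i) (fun i => - Y0 i) (fun i => - X2 i) (fun i => - Y1 i) N.
Proof.
case=> H1 H2; split=> i; first by rewrite H1 yavgN; lra.
by rewrite H2 sumrN -opprD mulNr.
Qed.

Lemma up_inv (R : realType) (n : nat) (phi : R) (X1 Y0 X2 Y1 : 'I_n -> R) (N : 'I_n -> {set 'I_n}) h :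
  0 < phi < 1 -> Eqs phi X1 Y0 X2 Y1 N ->
  (forall i, X1 i <= h) -> (forall i, Y0 i <= h) ->
  (forall i, Y1 i <= h) /\ (forall i, X2 i <= h).
Proof.
move=> /andP[p0 p1] [E1 E2] Hx Hy.
have HY1 : forall i, Y1 i <= h.
  move=> i; have a := yavg_le (ord_gt0 i) Hy.
  rewrite E1; have := Hx i; nra.
split=> // i; rewrite E2; apply: le_trans (cvx_le _ (Hx i) HY1) _.
rewrite ler_pdivrMr ?ltr_wpDl ?ler0n //; lra.
Qed.

Lemma up_contr (R : realType) (n : nat) (phi : R) (X1 Y0 X2 Y1 : 'I_n -> R) (N : 'I_n -> {set 'I_n}) h :
  0 < phi < 1 -> Eqs phi X1 Y0 X2 Y1 N -> (forall i, (0 < #|N i|)%N) ->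
  (forall i, X1 i <= h) -> (forall i, Y0 i <= h) ->
  (forall i, Y1 i <= yavg Y0 + (1 + phi) / 2 * (h - yavg Y0)) /\
  (forall i, X2 i <= yavg Y0 + (1 + phi) / 2 * (h - yavg Y0)).
Proof.
move=> /andP[p0 p1] [E1 E2] HN Hx Hy.
have HY1 : forall i, Y1 i <= phi * h + (1 - phi) * yavg Y0.
  by move=> i; rewrite E1 lerD2r ler_pM2l // Hx.
split=> i; have a := yavg_le (ord_gt0 i) Hy.
  apply: le_trans (HY1 i) _; nra.
rewrite E2; apply: le_trans (cvx_le _ (Hx i) HY1) _.
have N1 : 1 <= #|N i|%:R :> R by rewrite ler1n.
rewrite ler_pdivrMr ?ltr_wpDl ?ler0n //.
have : 0 <= (#|N i|%:R - 1) * (1 - phi) * (h - yavg Y0).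
  by apply: mulr_ge0; [apply: mulr_ge0|]; lra.
nra.
Qed.

Lemma Eqs_empty (R : realType) (n : nat) (phi : R) (X1 Y0 X2 Y1 : 'I_n -> R) (N : 'I_n -> {set 'I_n}) i :
  Eqs phi X1 Y0 X2 Y1 N -> #|N i| = 0%N -> X2 i = X1 i.
Proof.
case=> _ E2 /cards0_eq Ni; rewrite E2 Ni big_set0 cards0 addr0 add0r.
by rewrite divr1.
Qed.

Lemma up2 (R : realType) (n : nat) (phi : R) (X1 Y0 X2 Y1 X3 Y2 : 'I_n -> R)
  (N1 N2 : 'I_n -> {set 'I_n}) (S : {set 'I_n}) (r : 'I_n) (B h : R) :
  0 < phi < 1 -> Eqs phi X1 Y0 X2 Y1 N1 -> Eqs phi X2 Y1 X3 Y2 N2 ->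
  r \in S -> (forall i, i \in S -> X1 i <= B) ->
  (forall i, i \in S -> #|N1 i| = 0%N) -> (forall i, i \in S -> #|N2 i| = 0%N) ->
  (forall i, i \notin S -> (0 < #|N2 i|)%N) -> 0 <= h ->
  (forall i, X1 i <= B + h) -> (forall i, Y0 i <= B + h) ->
  (forall i, Y2 i <= B + (h - (1 - phi) * (phi * h / n%:R) / 2)) /\
  (forall i, X3 i <= B + (h - (1 - phi) * (phi * h / n%:R) / 2)).
Proof.
move=> p01 E F rS HS HN1 HN2 HN2' h0 Hx Hy.
have /andP[p0 p1] := p01.
have n0 := ord_gt0 r.
have nR : 1 <= n%:R :> R by rewrite ler1n.
have nz : n%:R != 0 :> R by rewrite pnatr_eq0 -lt0n.
have [HY1 HX2] := up_inv p01 E Hx Hy.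
case: (E) => E1 E2; case: (F) => F1 F2.
have X2S : forall i, i \in S -> X2 i <= B.
  by move=> i iS; rewrite (Eqs_empty E (HN1 i iS)) HS.
set c := phi * h / n%:R.
have cn : c * n%:R = phi * h by rewrite /c divfK.
have c0 : 0 <= c by rewrite /c divr_ge0 ?mulr_ge0 ?ler0n // ltW.
have ch : c <= phi * h by rewrite -cn; nra.
have a0 := yavg_le n0 Hy.
have Y1r : Y1 r <= B + h - phi * h.
  rewrite E1; have := HS r rS; nra.
have a1 : yavg Y1 <= B + h - c.
  rewrite /yavg ler_pdivrMr ?ltr0n // mulrBl cn mulrDl.
  rewrite (bigD1 r) //=.
  have : \sum_(i < n | i != r) Y1 i <= \sum_(i < n | i != r) (B + h).
    by apply: ler_sum => i _; exact: HY1.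
  have : \sum_(i < n) (B + h) = (B + h) + \sum_(i < n | i != r) (B + h) by rewrite (bigD1 r).
  rewrite sumr_const card_ord mulr_natr; lra.
have HY2 : forall i, Y2 i <= B + h - (1 - phi) * c.
  move=> i; rewrite F1; have := HX2 i; nra.
split=> i.
  apply: le_trans (HY2 i) _; nra.
case: (boolP (i \in S)) => iS.
  rewrite (Eqs_empty F (HN2 i iS)); apply: le_trans (X2S i iS) _; nra.
rewrite F2; apply: le_trans (cvx_le _ (HX2 i) HY2) _.
have Nge1 : 1 <= #|N2 i|%:R :> R by rewrite ler1n HN2'.
rewrite ler_pdivrMr ?ltr_wpDl ?ler0n //.
have : 0 <= (#|N2 i|%:R - 1) * (1 - phi) * c.
  by apply: mulr_ge0; [apply: mulr_ge0|]; lra.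
nra.
Qed.


Lemma split_l (n : nat) (i : 'I_n) : fintype.split (lshift n i) = inl i.
Proof. exact: (unsplitK (inl i : 'I_n + 'I_n)). Qed.
Lemma split_r (n : nat) (i : 'I_n) : fintype.split (rshift n i) = inr i.
Proof. exact: (unsplitK (inr i : 'I_n + 'I_n)). Qed.

Lemma scc_self (R : realType) (m : nat) (A : 'M[R]_m) i : i \in scc_of A i.
Proof. by rewrite inE /reach connect0. Qed.

Lemma scc_eq (R : realType) (m : nat) (A : 'M[R]_m) a k :
  a \in scc_of A k -> scc_of A a = scc_of A k.
Proof.
rewrite inE /reach => /andP[ka ak]; apply/setP => b; rewrite !inE /reach.
apply/andP/andP => [[ab ba]|[kb bk]]; split.
- exact: connect_trans ka ab.
- exact: connect_trans ba ak.
- exact: connect_trans ak kb.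
- exact: connect_trans bk ka.
Qed.

Lemma sccs_of (R : realType) (m : nat) (A : 'M[R]_m) C k :
  C \in sccs A -> k \in C -> C = scc_of A k.
Proof.
by move=> /imsetP[k' _ ->] kC; rewrite (scc_eq kC).
Qed.

Section G.
Variables (R : realType) (n : nat) (eps phi : R) (x0 y0 : 'I_n -> R).
Hypothesis p01 : 0 < phi < 1.

Local Notation P t := (Pmat eps phi x0 y0 t).
Local Notation NB t := (nbrs eps (xs eps phi x0 y0 t) (ys eps phi x0 y0 t)).

Lemma pred_only t i a : #|NB t i| = 0%N -> gadj (P t) a (lshift n i) -> a = lshift n i.
Proof.
move=> N0; rewrite /gadj /Pmat /=.
case: (split_ordP a) => j ->; [rewrite block_mxEul mxE | rewrite block_mxEur mxE].
  case: eqP => [-> // | _]; by rewrite (cards0_eq N0) inE ltxx.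
by rewrite N0 mulr0 mul0r ltxx.
Qed.

Lemma reach_only t i b : #|NB t i| = 0%N -> reach (P t) b (lshift n i) -> b = lshift n i.
Proof.
move=> N0; rewrite /reach => /connectP [p Hp Hl].
elim: p b Hp Hl => [|c p IH] b /=; first by move=> _ ->.
move=> /andP[Hbc Hp] Hl; have Hc := IH c Hp Hl; subst c.
exact: pred_only N0 Hbc.
Qed.

Lemma edge_xy t i : gadj (P t) (lshift n i) (rshift n i).
Proof.
case/andP: p01 => p0 p1.
by rewrite /gadj /Pmat /= block_mxEdl mxE eqxx mulr1n.
Qed.

Lemma edge_yx t i j : (0 < #|NB t i|)%N -> gadj (P t) (rshift n j) (lshift n i).
Proof.
case/andP: p01 => p0 p1 N0.
have n0 : (0 < n)%N by exact: leq_ltn_trans (leq0n i) (ltn_ord i).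
rewrite /gadj /Pmat /= block_mxEur mxE.
apply: divr_gt0; first by apply: mulr_gt0; [lra | rewrite ltr0n].
by apply: mulr_gt0; [rewrite ltr_wpDl ?ler0n // | rewrite ltr0n].
Qed.

Lemma scc_single t i : #|NB t i| = 0%N -> scc_of (P t) (lshift n i) = [set lshift n i]%SET.
Proof.
move=> N0; apply/setP => b; rewrite !inE; apply/andP/eqP => [[_ h]|->].
  exact: reach_only N0 h.
by rewrite /reach connect0.
Qed.

Lemma scc_pair t i : (0 < #|NB t i|)%N -> rshift n i \in scc_of (P t) (lshift n i).
Proof.
move=> N0; rewrite inE /reach; apply/andP; split; apply: connect1.
  exact: edge_xy.
exact: edge_yx.
Qed.

Lemma factA t i : ([set lshift n i]%SET \in sccs (P t)) = (#|NB t i| == 0%N).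
Proof.
apply/idP/eqP => [H|N0]; last first.
  by rewrite -(scc_single N0); apply: imset_f.
have E := sccs_of H (set11 (lshift n i)).
apply/eqP; rewrite eqn0Ngt; apply/negP => N0.
have := scc_pair N0; rewrite -E inE => /eqP/eqP.
by rewrite eq_rlshift.
Qed.

Lemma sc_nbrs t : strongly_connected (P t) -> forall i, (0 < #|NB t i|)%N.
Proof.
move=> H i; rewrite lt0n; apply/negP => /eqP N0.
have := reach_only N0 (H (rshift n i) (lshift n i)).
by move/eqP; rewrite eq_rlshift.
Qed.

Lemma theta2 t i : #|NB t i| = 0%N -> lshift n i \in singleton_source_nodes (P t).
Proof.
move=> N0; apply/bigcupP; exists [set lshift n i]%SET; last exact: set11.
rewrite factA N0 eqxx cards1 eqxx /=.
apply/forallP => D; apply/implyP => HD; rewrite /cond_edge.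
apply/negP => /andP[neq /existsP[a /andP[aD /existsP[b /andP[bC ab]]]]].
move: bC; rewrite inE => /eqP bE; subst b.
have aE := pred_only N0 ab; subst a.
by rewrite (sccs_of HD aD) scc_single // eqxx in neq.
Qed.

Lemma theta1 t k : k \in singleton_source_nodes (P t) ->
  exists2 i, k = lshift n i & #|NB t i| = 0%N.
Proof.
move=> /bigcupP [C /andP[CS /andP[C1 src]] kC].
have [x Cx] := cards1P C1.
move: kC; rewrite Cx inE => /eqP kx; subst x.
case: (split_ordP k) => i E; subst k.
  by exists i => //; apply/eqP; rewrite -factA -Cx.
exfalso; move/forallP: src => /(_ (scc_of (P t) (lshift n i))).
rewrite imset_f //= /cond_edge; apply/negP; apply/negPn.
apply/andP; split.
  apply/negP => /eqP E; have := scc_self (P t) (lshift n i).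
  by rewrite E Cx inE eq_lrshift.
apply/existsP; exists (lshift n i); rewrite scc_self /=.
apply/existsP; exists (rshift n i); rewrite Cx set11 /=.
exact: edge_xy.
Qed.
End G.


Lemma abs_le_sum (R : realType) (n : nat) (f : 'I_n -> R) i : `|f i| <= \sum_j `|f j|.
Proof.
by rewrite (bigD1 i) //= lerDl sumr_ge0.
Qed.

Section S.
Variables (R : realType) (n : nat) (eps phi : R) (x0 y0 : 'I_n -> R).
Hypothesis p01 : 0 < phi < 1.

Local Notation X t := (xs eps phi x0 y0 t).
Local Notation Y t := (ys eps phi x0 y0 t).
Local Notation NB t := (nbrs eps (xs eps phi x0 y0 t) (ys eps phi x0 y0 t)).

Lemma Eqs_state s : Eqs phi (X s.+1) (Y s) (X s.+2) (Y s.+1) (NB s.+1).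
Proof. by split. Qed.

Lemma x_const t i : #|NB t i| = 0%N -> X t.+1 i = X t i.
Proof.
move=> N0.
change (X t.+1 i) with ((X t i + \sum_(j in NB t i) Y t j) / (#|NB t i|%:R + 1)).
by rewrite (cards0_eq N0) big_set0 cards0 addr0 add0r divr1.
Qed.

Definition Bnd s lo hi :=
  [/\ (forall i, X s.+1 i <= hi), (forall i, Y s i <= hi),
      (forall i, lo <= X s.+1 i) & (forall i, lo <= Y s i)].

Lemma Bnd_inv s lo hi : Bnd s lo hi -> Bnd s.+1 lo hi.
Proof.
case=> hx hy lx ly.
have [u1 u2] := up_inv p01 (Eqs_state s) hx hy.
have [v1 v2] := up_inv (h := - lo) p01 (EqsN (Eqs_state s))
  (fun i => ltac:(rewrite lerN2; exact: lx i)) (fun i => ltac:(rewrite lerN2; exact: ly i)).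
split=> // i; [move: (v2 i) | move: (v1 i)]; by rewrite lerN2.
Qed.

Lemma Bnd_add s d lo hi : Bnd s lo hi -> Bnd (s + d) lo hi.
Proof.
move=> H; elim: d => [|d IH]; first by rewrite addn0.
by rewrite addnS; apply: Bnd_inv.
Qed.

Lemma Bnd_contr s lo hi : (forall i, (0 < #|NB s.+1 i|)%N) -> Bnd s lo hi ->
  Bnd s.+1 (yavg (Y s) + (1 + phi) / 2 * (lo - yavg (Y s)))
           (yavg (Y s) + (1 + phi) / 2 * (hi - yavg (Y s))).
Proof.
move=> HN [hx hy lx ly].
have [u1 u2] := up_contr p01 (Eqs_state s) HN hx hy.
have [v1 v2] := up_contr (h := - lo) p01 (EqsN (Eqs_state s)) HN
  (fun i => ltac:(rewrite lerN2; exact: lx i)) (fun i => ltac:(rewrite lerN2; exact: ly i)).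
rewrite yavgN in v1 v2.
split=> // i; [move: (v2 i) | move: (v1 i)]; lra.
Qed.

Lemma Bnd_z s lo hi : Bnd s lo hi -> forall l, lo <= zs eps phi x0 y0 s.+1 l <= hi.
Proof.
case=> hx hy lx ly l; rewrite /zs; case: (fintype.split l) => i /=.
  by rewrite lx hx.
by rewrite ly hy.
Qed.

Lemma Bnd_init s : let C := \sum_i `|X s.+1 i| + \sum_i `|Y s i| in Bnd s (- C) C.
Proof.
move=> C.
have hx : forall i, `|X s.+1 i| <= C.
  move=> i; apply: le_trans (abs_le_sum _ i) _; rewrite /C lerDl sumr_ge0 //.
have hy : forall i, `|Y s i| <= C.
  move=> i; apply: le_trans (abs_le_sum _ i) _; rewrite /C lerDr sumr_ge0 //.
split=> i.
- by have := hx i; rewrite ler_norml => /andP[].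
- by have := hy i; rewrite ler_norml => /andP[].
- by have := hx i; rewrite ler_norml => /andP[].
- by have := hy i; rewrite ler_norml => /andP[].
Qed.

Lemma core_i T' lo0 hi0 :
  (forall t, (T'.+1 <= t)%N -> forall i, (0 < #|NB t i|)%N) -> Bnd T' lo0 hi0 ->
  forall k, exists lo hi, hi - lo <= ((1 + phi) / 2) ^+ k * (hi0 - lo0) /\
     forall j, (k <= j)%N -> Bnd (T' + j) lo hi.
Proof.
move=> HN B0; elim=> [|k [lo [hi [Hd Hb]]]].
  by exists lo0, hi0; split; [rewrite expr0 mul1r | move=> j _; apply: Bnd_add].
have := Bnd_contr (HN _ _) (Hb k (leqnn k)).
set a := yavg _ => Hc.
exists (a + (1 + phi) / 2 * (lo - a)), (a + (1 + phi) / 2 * (hi - a)); split.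
  rewrite exprS -mulrA.
  have q0 : 0 <= (1 + phi) / 2 by case/andP: p01 => ? ?; lra.
  have := ler_wpM2l q0 Hd; lra.
move=> j kj; have -> : (T' + j = (T' + k).+1 + (j - k.+1))%N by lia.
apply: Bnd_add; apply: Hc; lia.
Qed.


Lemma fq (h : R) : (0 < n)%N ->
  h - (1 - phi) * (phi * h / n%:R) / 2 = (1 - (1 - phi) * (phi / n%:R) / 2) * h.
Proof. move=> n0; field. by rewrite pnatr_eq0 -lt0n. Qed.

Section Two.
Variables (T' : nat) (S : {set 'I_n}) (r p : 'I_n).
Hypotheses (rS : r \in S) (pS : p \in S)
  (HS : forall t, (T'.+1 <= t)%N -> forall i, (#|NB t i| == 0%N) = (i \in S))
  (Hm : forall i, i \in S -> X T'.+1 p <= X T'.+1 i <= X T'.+1 r).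

Lemma xconst i d : i \in S -> X (T'.+1 + d) i = X T'.+1 i.
Proof.
move=> iS; elim: d => [|d IH]; first by rewrite addn0.
rewrite addnS x_const // ; apply/eqP; rewrite HS //; lia.
Qed.

Local Notation A := (X T'.+1 p).
Local Notation B := (X T'.+1 r).

Lemma Bnd2 s lo hi : (T' <= s)%N -> Bnd s lo hi -> lo <= A -> B <= hi ->
  Bnd s.+2 (A - ((A - lo) - (1 - phi) * (phi * (A - lo) / n%:R) / 2))
           (B + ((hi - B) - (1 - phi) * (phi * (hi - B) / n%:R) / 2)).
Proof.
move=> sT [hx hy lx ly] lA Bh.
have XS : forall i, i \in S -> X s.+1 i = X T'.+1 i.
  move=> i iS; have -> : s.+1 = (T'.+1 + (s - T'))%N by lia.
  exact: xconst.
have N1 : forall i, i \in S -> #|NB s.+1 i| = 0%N.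
  by move=> i iS; apply/eqP; rewrite HS //; lia.
have N2 : forall i, i \in S -> #|NB s.+2 i| = 0%N.
  by move=> i iS; apply/eqP; rewrite HS //; lia.
have N2' : forall i, i \notin S -> (0 < #|NB s.+2 i|)%N.
  by move=> i iS; rewrite lt0n; rewrite HS //; lia.
have SB : forall i, i \in S -> X s.+1 i <= B.
  by move=> i iS; rewrite (XS i iS); case/andP: (Hm iS).
have SA : forall i, i \in S -> - X s.+1 i <= - A.
  by move=> i iS; rewrite (XS i iS) lerN2; case/andP: (Hm iS).
have h0 : 0 <= hi - B by lra.
have h0' : 0 <= A - lo by lra.
have hx' : forall i, X s.+1 i <= B + (hi - B) by move=> i; have := hx i; lra.
have hy' : forall i, Y s i <= B + (hi - B) by move=> i; have := hy i; lra.
have lx' : forall i, - X s.+1 i <= - A + (A - lo) by move=> i; have := lx i; lra.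
have ly' : forall i, - Y s i <= - A + (A - lo) by move=> i; have := ly i; lra.
have [u1 u2] := up2 p01 (Eqs_state s) (Eqs_state s.+1) rS SB N1 N2 N2' h0 hx' hy'.
have [v1 v2] := up2 p01 (EqsN (Eqs_state s)) (EqsN (Eqs_state s.+1)) rS SA N1 N2 N2' h0' lx' ly'.
split=> i; [move: (u2 i) | move: (u1 i) | move: (v2 i) | move: (v1 i)]; lra.
Qed.


Lemma core_ii lo0 hi0 (D : R) : Bnd T' lo0 hi0 -> lo0 <= A -> B <= hi0 ->
  hi0 - B <= D -> A - lo0 <= D ->
  forall k, exists lo hi, [/\ lo <= A, B <= hi,
    hi - B <= (1 - (1 - phi) * (phi / n%:R) / 2) ^+ k * D,
    A - lo <= (1 - (1 - phi) * (phi / n%:R) / 2) ^+ k * D &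
    forall j, (2 * k <= j)%N -> Bnd (T' + j) lo hi].
Proof.
move=> B0 lA Bh hD lD.
have n0 := ord_gt0 r.
case/andP: p01 => p0 p1.
set q := 1 - (1 - phi) * (phi / n%:R) / 2.
have pn : phi / n%:R <= phi by rewrite ler_pdivrMr ?ltr0n // ler_peMr ?ler1n // ltW.
have pn0 : 0 <= phi / n%:R by rewrite divr_ge0 // ?ler0n // ltW.
have q0 : 0 <= q.
  have : (1 - phi) * (phi / n%:R) <= 1 * 1.
    by apply: ler_pM; lra.
  rewrite /q; lra.
elim=> [|k [lo [hi [lA' Bh' hD' lD' Hb]]]].
  exists lo0, hi0; split; rewrite ?expr0 ?mul1r //.
  by move=> j _; apply: Bnd_add.
have Hc := Bnd2 (leq_addr _ _) (Hb _ (leqnn _)) lA' Bh'.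
rewrite (fq (A - lo) n0) (fq (hi - B) n0) -/q in Hc.
have e1 : 0 <= q * (hi - B) by rewrite mulr_ge0 // subr_ge0.
have e2 : 0 <= q * (A - lo) by rewrite mulr_ge0 // subr_ge0.
exists (A - q * (A - lo)), (B + q * (hi - B)); split.
- lra.
- lra.
- by rewrite exprS -mulrA addrAC subrr add0r; apply: ler_wpM2l.
- by rewrite exprS -mulrA opprB addrC subrK; apply: ler_wpM2l.
move=> j kj; have -> : (T' + j = (T' + 2 * k).+2 + (j - (2 * k).+2))%N by clear -kj; lia.
apply: Bnd_add; exact: Hc.
Qed.

End Two.
End S.


Lemma pow_small (R : realType) (q D e : R) : 0 <= q < 1 -> 0 <= D -> 0 < e ->
  exists k, q ^+ k * D < e.
Proof.
move=> /andP[q0 q1] D0 e0.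
have qa : `|q| < 1 by rewrite ger0_norm.
have := cvg_expr qa; move/cvgrPdist_lt => /(_ (e / (D + 1))).
have eD : 0 < e / (D + 1) by rewrite divr_gt0 // ltr_wpDl.
move=> /(_ eD) [N _ HN]; exists N.
have := HN N (leqnn N); rewrite /= sub0r normrN ger0_norm ?exprn_ge0 // => h.
apply: (le_lt_trans (y := e / (D + 1) * D)); first by rewrite ler_wpM2r // ltW.
by rewrite mulrAC ltr_pdivrMr ?ltr_wpDl // ltr_pM2l //; lra.
Qed.

Lemma sum_ind (R : realType) (m : nat) (p : 'I_m) (f : 'I_m -> R) :
  \sum_i (i == p)%:R * f i = f p.
Proof.
rewrite (bigD1 p) //= eqxx mul1r big1 ?addr0 // => i /negbTE ->.
by rewrite mul0r.
Qed.

Lemma conv_in (R : realType) (m : nat) (Th : {set 'I_m}) (v : 'I_m -> R) p r (l : R) :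
  p \in Th -> r \in Th -> 0 <= l <= 1 -> conv_pts Th v ((1 - l) * v p + l * v r).
Proof.
move=> pT rT /andP[l0 l1].
exists (fun i => (1 - l) * (i == p)%:R + l * (i == r)%:R); split.
- by move=> i; apply: addr_ge0; apply: mulr_ge0; rewrite ?ler0n //; lra.
- move=> i iT; have -> : (i == p) = false by apply/negP => /eqP E; subst; rewrite pT in iT.
  have -> : (i == r) = false by apply/negP => /eqP E; subst; rewrite rT in iT.
  by rewrite /= !mulr0 addr0.
- have := sum_ind p (fun _ => 1 : R); have := sum_ind r (fun _ => 1 : R).
  under eq_bigr do rewrite mulr1; move=> Hr.
  under eq_bigr do rewrite mulr1; move=> Hp.
  by rewrite big_split /= -!mulr_sumr Hp Hr; lra.
- under eq_bigr do rewrite mulrDl -!mulrA.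
  by rewrite big_split /= -!mulr_sumr !sum_ind.
Qed.

Lemma dist_le (R : realType) (m : nat) (Th : {set 'I_m}) (v : 'I_m -> R) p r (d x : R) :
  p \in Th -> r \in Th -> v p <= v r -> 0 <= d -> v p - d <= x <= v r + d ->
  0 <= dist x (conv_pts Th v) <= d.
Proof.
move=> pT rT pr d0 /andP[xl xu].
have inP : conv_pts Th v (v p).
  have := conv_in v pT rT (l := 0); rewrite subr0 mul1r mul0r addr0; apply; lra.
have inR : conv_pts Th v (v r).
  have := conv_in v pT rT (l := 1); rewrite subrr mul0r mul1r add0r; apply; lra.
have lb : has_lbound [set `|x - y| | y in conv_pts Th v].
  by exists 0 => _ [y _ <-].
have ne : [set `|x - y| | y in conv_pts Th v] !=set0.
  by exists `|x - v p|, (v p).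
apply/andP; split.
  by apply: lb_le_inf => // _ [y _ <-].
suff [y yin yd] : exists2 y, conv_pts Th v y & `|x - y| <= d.
  by apply: le_trans yd; apply: ge_inf => //; exists y.
case: (lerP x (v p)) => hp.
  by exists (v p) => //; rewrite ler_norml; apply/andP; split; lra.
case: (lerP (v r) x) => hr.
  by exists (v r) => //; rewrite ler_norml; apply/andP; split; lra.
exists x; last by rewrite subrr normr0.
have nz : v r - v p != 0 by rewrite subr_eq0; apply/eqP => E; lra.
set l := (x - v p) / (v r - v p).
have lE : l * (v r - v p) = x - v p by rewrite /l divfK.
have l0 : 0 <= l by rewrite /l divr_ge0 //; lra.
have l1 : l <= 1 by rewrite /l ler_pdivrMr ?mul1r; lra.
have := conv_in v pT rT (l := l); rewrite (_ : (1 - l) * v p + l * v r = x).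
  by apply; rewrite l0 l1.
have : l * v r - l * v p = x - v p by rewrite -mulrBr.
lra.
Qed.

Lemma dist_empty (R : realType) (m : nat) (Th : {set 'I_m}) (v : 'I_m -> R) (x : R) :
  (forall k, k \notin Th) -> dist x (conv_pts Th v) = 0.
Proof.
move=> H; rewrite /dist (_ : conv_pts Th v = set0) ?image_set0 ?inf0 //.
apply/seteqP; split => y //= [w [_ H0 H1 _]].
have : \sum_(i < m) w i = 0 by rewrite big1 // => i _; exact: H0.
by rewrite H1 => /eqP; rewrite oner_eq0.
Qed.


Lemma zs_bnd (R : realType) (n : nat) (eps phi : R) (x0 y0 : 'I_n -> R) T' k lo hi :
  (forall j, (k <= j)%N -> Bnd eps phi x0 y0 (T' + j) lo hi) ->
  forall t, ((T' + k).+1 <= t)%N -> forall l, lo <= zs eps phi x0 y0 t l <= hi.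
Proof.
move=> Hb t Ht l; have -> : t = (T' + (t.-1 - T')).+1 by clear -Ht; lia.
apply: Bnd_z; apply: Hb; clear -Ht; lia.
Qed.

Lemma q2_01 (R : realType) (n : nat) (phi : R) : 0 < phi < 1 -> (0 < n)%N ->
  0 <= 1 - (1 - phi) * (phi / n%:R) / 2 < 1.
Proof.
case/andP=> p0 p1 n0.
have pn : phi / n%:R <= phi by rewrite ler_pdivrMr ?ltr0n // ler_peMr ?ler1n // ltW.
have pn0 : 0 < phi / n%:R by rewrite divr_gt0 // ?ltr0n.
have : 0 < (1 - phi) * (phi / n%:R) by rewrite mulr_gt0 // subr_gt0.
have : (1 - phi) * (phi / n%:R) <= 1 * 1 by apply: ler_pM; lra.
move=> ? ?; apply/andP; split; lra.
Qed.

Theorem theorem3 (R : realType) (n : nat) (eps phi : R)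
    (x0 y0 : 'I_n -> R) (T : nat) :
  0 <= eps <= 1 -> 0 < phi < 1 ->
  (forall i, 0 <= x0 i <= 1) -> (forall i, 0 <= y0 i <= 1) ->
  (0 < T)%N ->
  (forall t, (T <= t)%N -> sccs (Pmat eps phi x0 y0 t) = sccs (Pmat eps phi x0 y0 T)) ->
  let z := zs eps phi x0 y0 in
  let P := Pmat eps phi x0 y0 in
  ((forall t, (T <= t)%N -> strongly_connected (P t)) ->
     (forall i, cvgn (fun t => z t i)) /\
     (forall i j, limn (fun t => z t i) = limn (fun t => z t j)))
  /\
  ((forall t, (T <= t)%N -> one_sink_singleton_sources (P t)) ->
     let Theta := singleton_source_nodes (P T) in
     let Omega := sink_nodes (P T) in
     (forall i, i \in Theta -> forall t, (T <= t)%N -> z t i = z T i) /\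
     (forall j, j \in Omega ->
        (fun t => dist (z t j) (conv_pts Theta (z T))) @ \oo --> (0 : R))).
Proof.
move=> _ p01 _ _ T0 Hsccs.
case: T T0 Hsccs => [//|T'] _ Hsccs z P.
rewrite /z /P; clear z P.
set C := \sum_i `|xs eps phi x0 y0 T'.+1 i| + \sum_i `|ys eps phi x0 y0 T' i|.
have B0 : Bnd eps phi x0 y0 T' (- C) C := Bnd_init eps phi x0 y0 T'.
have C0 : 0 <= C by rewrite addr_ge0 // sumr_ge0.
split.
- move=> Hsc.
  have HN : forall t, (T'.+1 <= t)%N -> forall i,
      (0 < #|nbrs eps (xs eps phi x0 y0 t) (ys eps phi x0 y0 t) i|)%N.
    by move=> t Ht; apply: sc_nbrs; apply: Hsc.
  have core := core_i p01 HN B0.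
  have K : forall e, 0 < e -> exists N, forall t s l l', (N <= t)%N -> (N <= s)%N ->
      `|zs eps phi x0 y0 t l - zs eps phi x0 y0 s l'| < e.
    move=> e e0.
    have q01 : 0 <= (1 + phi) / 2 < 1 by case/andP: p01 => ? ?; apply/andP; split; lra.
    have D0 : 0 <= C - - C by lra.
    have [k Hk] := pow_small q01 D0 e0.
    have [lo [hi [Hd Hb]]] := core k.
    exists (T' + k).+1 => t s l l' Ht Hs.
    have /andP[a1 a2] := zs_bnd Hb Ht l.
    have /andP[b1 b2] := zs_bnd Hb Hs l'.
    rewrite ltr_norml; apply/andP; split; lra.
  have cv : forall i, cvgn (fun t => zs eps phi x0 y0 t i).
    move=> i; apply/cauchy_cvgP; apply: cauchy_exP => e e0.
    have [N HN'] := K e e0; exists (zs eps phi x0 y0 N i).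
    exists N => // t /= Ht; rewrite /ball /=; exact: HN'.
  split => // i j.
  have H := cvgB (cv i) (cv j).
  apply/eqP; rewrite -subr_eq0; apply/eqP.
  have H0 : ((fun t => zs eps phi x0 y0 t i) - (fun t => zs eps phi x0 y0 t j)) x @[x --> \oo] --> (0:R).
  apply/cvgrPdist_lt => e e0; have [N HN'] := K e e0.
  exists N => // t /= Ht; rewrite sub0r normrN; exact: HN'.
  have H1 : ((fun t => zs eps phi x0 y0 t i) - (fun t => zs eps phi x0 y0 t j)) x @[x --> \oo] --> limn (fun t => zs eps phi x0 y0 t i) - limn (fun t => zs eps phi x0 y0 t j).
    by apply: H; apply: eventually_filter.
  exact: (cvg_unique (@norm_hausdorff _ R^o) H1 H0).
- move=> _.
  set Th := singleton_source_nodes (Pmat eps phi x0 y0 T'.+1).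
  set S := [set i | #|nbrs eps (xs eps phi x0 y0 T'.+1) (ys eps phi x0 y0 T'.+1) i| == 0%N]%SET.
  have HS : forall t, (T'.+1 <= t)%N -> forall i,
      (#|nbrs eps (xs eps phi x0 y0 t) (ys eps phi x0 y0 t) i| == 0%N) = (i \in S).
    by move=> t Ht i; rewrite /S inE -!(factA eps x0 y0 p01) Hsccs.
  have ThE : forall k, k \in Th -> exists2 i, k = lshift n i & i \in S.
    by move=> k /(theta1 p01) [i -> N0]; exists i => //; rewrite /S inE N0.
  have ThS : forall i, i \in S -> lshift n i \in Th.
    by move=> i; rewrite /S inE => /eqP N0; apply: theta2.
  split.
  + move=> k /ThE [i -> iS] t Ht.
    rewrite /zs !split_l.
    have -> : t = (T'.+1 + (t - T'.+1))%N by clear -Ht; lia.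
    exact: (xconst p01 iS iS HS).
  + move=> j _.
    case: (set_0Vmem S) => [S0 | [r0 r0S]].
      have -> : (fun t => dist (zs eps phi x0 y0 t j) (conv_pts Th (zs eps phi x0 y0 T'.+1)))
          = fun _ => 0.
        apply/funext => t; apply: dist_empty => k; apply/negP => /ThE [i _].
        by rewrite S0 inE.
      exact: cvg_cst.
    pose F := fun i => xs eps phi x0 y0 T'.+1 i.
    have [r rS rmax] := @arg_maxP _ R _ r0 (fun i => i \in S) F r0S.
    have [p pS pmin] := @arg_minP _ R _ r0 (fun i => i \in S) F r0S.
    have Hm : forall i, i \in S -> F p <= F i <= F r by move=> i iS; apply/andP; split; [exact: pmin | exact: rmax].
    case: B0 => hx hy lx ly.
    have e1 : C - F r <= C + C by have := lx r; rewrite /F; lra.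
    have e2 : F p - - C <= C + C by have := hx p; rewrite /F; lra.
    have core := core_ii p01 rS pS HS Hm (Bnd_init eps phi x0 y0 T') (lx p) (hx r) e1 e2.
    have q01 := q2_01 p01 (ord_gt0 r).
    set q := 1 - (1 - phi) * (phi / n%:R) / 2 in core q01.
    apply/cvgrPdist_lt => e e0.
    have D0 : 0 <= C + C by lra.
    have [k Hk] := pow_small q01 D0 e0.
    have [lo [hi [lA' Bh' hD' lD' Hb]]] := core k.
    exists (T' + 2 * k).+1 => // t /= Ht.
    have /andP[z1 z2] := zs_bnd Hb Ht j.
    have vp : zs eps phi x0 y0 T'.+1 (lshift n p) = F p by rewrite /zs split_l.
    have vr : zs eps phi x0 y0 T'.+1 (lshift n r) = F r by rewrite /zs split_l.
    have d0 : 0 <= q ^+ k * (C + C) by rewrite mulr_ge0 // exprn_ge0 //; case/andP: q01.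
    have Hd := dist_le (v := zs eps phi x0 y0 T'.+1) (d := q ^+ k * (C + C))
      (x := zs eps phi x0 y0 t j) (ThS p pS) (ThS r rS).
    rewrite vp vr in Hd.
    have pr : F p <= F r by have := Hm p pS; case/andP => a b; exact: le_trans a b.
    have Hx : F p - q ^+ k * (C + C) <= zs eps phi x0 y0 t j <= F r + q ^+ k * (C + C).
      apply/andP; split.
        by apply: le_trans z1; rewrite lerBlDr -lerBlDl.
      by apply: le_trans z2 _; rewrite -lerBlDl.
    have := Hd pr d0 Hx.
    move=> /andP[dd0 dd1].
    rewrite sub0r normrN ger0_norm //; exact: le_lt_trans dd1 Hk.
Qed.
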